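(* Let $p$ be an odd prime, $\ell$ an integer not divisible by $p$, $a$ the remainder of $\ell$ mod $p$, $\nu_i=\lfloor\frac{a+i\ell}{p}\rfloor$ and $n_i=\min_{0\le j\le p-1-i}(\nu_{i+j}-\nu_j)$ for $0\le i\le p-1$. Fix $0\le k,i\le p-1$ with $k+i\le p-1$ and put $h=p-i$, and for $0\le j\le p-1$ let $\mu^{(k)}_{j,i}=\delta_{j,k+i}\,\pi_K^{\nu_j-\nu_k-n_i}$ (these lie in $\mathcal{O}_K$), with $\overline{\mu}^{(k)}_{j,i}$ its reduction modulo $\mathfrak{p}_K$. Then: (1) if $j\ne k+i$, $\overline{\mu}^{(k)}_{j,i}=0$; (2) if $h\notin E$, then $\overline{\mu}^{(k)}_{k+i,i}=1$ if $h=p$ or $\operatorname{frac}((k+1)a/p)<\operatorname{frac}(ha/p)$, and $\overline{\mu}^{(k)}_{k+i,i}=0$ otherwise; (3) if $h\in E$, then $\overline{\mu}^{(k)}_{k+i,i}=1$.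
   Context: $K$ is a $p$-adic field with uniformizer $\pi_K$ and maximal ideal $\mathfrak{p}_K$. For a real $x$, $\operatorname{frac}(x)=x-\lfloor x\rfloor$. $E=\{h\in\mathbb{Z}: 1\le h<p,\ \text{and for all integers } 1\le h'<h,\ \operatorname{frac}(h'a/p)>\operatorname{frac}(ha/p)\}$. (Interpretation: in the typical setting with $H=K[w]$, $\mu^{(k)}_{j,i}$ is the coefficient of $\pi_K^{-\nu_j}w^j$ in $\pi_K^{-\nu_k}w^k\cdot\pi_K^{-n_i}w^i$, i.e. the $(j,i)$ entry of the matrix of multiplication by $\pi_K^{-\nu_k}w^k$ from the basis $\{\pi_K^{-n_i}w^i\}$ of $\mathfrak{A}_{L/K}$ to the basis $\{\pi_K^{-\nu_j}w^j\}$ of $\mathfrak{A}_\theta$.) *)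

(* Defs.v *)
From mathcomp Require Import all_boot all_order all_algebra.
Set Implicit Arguments. Unset Strict Implicit. Unset Printing Implicit Defensive.
Import Order.TTheory GRing.Theory Num.Theory.
Local Open Scope ring_scope.

Definition arem (p : nat) (l : int) : int := (l %% p%:Z)%Z.

(* nu_i = floor((a + i l)/p); for p > 0, intdiv's %/ is the floor. *)
Definition nu (p : nat) (l : int) (i : nat) : int :=
  ((arem p l + i%:Z * l) %/ p%:Z)%Z.

(* n_i = min_{0 <= j <= p-1-i} (nu_{i+j} - nu_j)  (j = 0 is the seed) *)
Definition nmin (p : nat) (l : int) (i : nat) : int :=
  \big[Order.min/(nu p l i - nu p l 0)]_(j < (p - i)%N)
     (nu p l (i + j) - nu p l j).

Definition fracq (x : rat) : rat := x - (Num.floor x)%:~R.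

Definition fr (p : nat) (l : int) (h : nat) : rat :=
  fracq ((h%:Z * arem p l)%:~R / p%:~R).

Definition in_E (p : nat) (l : int) (h : nat) : Prop :=
  (1 <= h)%N /\ (h < p)%N /\
  (forall h' : nat, (1 <= h')%N -> (h' < h)%N -> fr p l h < fr p l h').

Definition mu_exp (p : nat) (l : int) (k i : nat) : int :=
  nu p l (k + i) - nu p l k - nmin p l i.

(* mu^{(k)}_{j,i} = delta_{j,k+i} pi^{nu_j - nu_k - n_i}, as an element of O
   (the exponent is shown nonnegative in the statement). *)
Definition mu (O : pzRingType) (piK : O) (p : nat) (l : int) (k j i : nat) : O :=
  if j == (k + i)%N then piK ^+ `|mu_exp p l k i|%N else 0.

(* Main.v *)
Require Import Defs.
From mathcomp Require Import all_boot all_order all_algebra.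
From mathcomp Require Import ring lra zify.
From Stdlib Require Import Classical.
Import Order.TTheory GRing.Theory Num.Theory.
Local Open Scope ring_scope.
Lemma divzD_carry (u v : int) (d : nat) : (0 < d)%N ->
  ((u + v) %/ d)%Z = (u %/ d)%Z + (v %/ d)%Z +
     (if (u %% d)%Z + (v %% d)%Z < d%:Z then 0 else 1).
Proof.
move=> d0.
have dn0 : d%:Z != 0 by rewrite eqz_nat -lt0n.
have hu0 := modz_ge0 u dn0; have hv0 := modz_ge0 v dn0.
have hu1 := ltz_pmod u (d0 : (0 < d%:Z)); have hv1 := ltz_pmod v (d0 : (0 < d%:Z)).
rewrite {1}(divz_eq u d) {1}(divz_eq v d).
set qu := (u %/ d)%Z; set qv := (v %/ d)%Z; set ru := (u %% d)%Z; set rv := (v %% d)%Z.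
case: ifP => hlt.
  have -> : qu * d + ru + (qv * d + rv) = (qu + qv) * d%:Z + (ru + rv) by ring.
  rewrite divzMDl // divz_small ?addr0 //.
  by apply/andP; split; [lia | rewrite gez0_abs //].
have -> : qu * d + ru + (qv * d + rv) = (qu + qv + 1) * d%:Z + (ru + rv - d%:Z) by ring.
rewrite divzMDl // divz_small ?addr0 //.
by apply/andP; split; [lia | rewrite gez0_abs //; lia].
Qed.

Lemma fr_nat (p : nat) (l : int) h : (0 < p)%N ->
  fr p l h = ((h * `|arem p l|%N) %% p)%N%:R / p%:R.
Proof.
move=> p0.
have pn0 : p%:Z != 0 by rewrite eqz_nat -lt0n.
have ha : arem p l = (`|arem p l|%N)%:Z by rewrite abszE ger0_norm // modz_ge0.
rewrite /fr ha.
set n := (h * `|arem p l|%N)%N.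
have -> : (h%:Z * (`|arem p l|%N)%:Z) = n%:Z by rewrite /n PoszM.
have pR : (0 : rat) < p%:R by rewrite ltr0n.
have -> : ((n%:Z)%:~R : rat) / (p%:Z)%:~R = (n %/ p)%N%:R + (n %% p)%N%:R / p%:R.
  rewrite -!pmulrn {1}(divn_eq n p) natrD natrM mulrDl mulfK //.
  by rewrite gt_eqF.
rewrite /Defs.fracq (@floor_def _ _ (n %/ p)%N); last first.
  apply/andP; split.
    by rewrite -pmulrn lerDl divr_ge0 // ler0n.
  rewrite intrD -pmulrn ltrD2l ltr_pdivrMr // mul1r ltr_nat ltn_pmod //.
by rewrite -pmulrn addrC addKr.
Qed.

Lemma sum_eq_p (a b q p : nat) : (0 < a)%N -> (a < p)%N -> (b < p)%N ->
  (a + b = q * p + 0)%N -> (a + b = p)%N.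
Proof.
move=> a0 ap bp; case: q => [|[|q]]; first by rewrite mul0n; lia.
  by rewrite mul1n addn0.
by rewrite !mulSn; lia.
Qed.
Theorem proposition7p4 (p : nat) (l : int)
  (O : comNzRingType) (F : fieldType) (red : {rmorphism O -> F}) (piK : O)
  (k i : nat) :
  prime p -> odd p -> ~~ (p%:Z %| l)%Z ->
  red piK = 0 ->
  (k + i <= p - 1)%N ->
  let h := (p - i)%N in
  (0 <= mu_exp p l k i)%R /\
  (forall j : nat, (j <= p - 1)%N -> j != (k + i)%N -> red (mu piK p l k j i) = 0) /\
  (~ in_E p l h ->
     red (mu piK p l k (k + i) i) =
       (if (h == p) || (fr p l (k + 1) < fr p l h) then 1 else 0)) /\
  (in_E p l h -> red (mu piK p l k (k + i) i) = 1).
Proof.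
move=> pr oddp ndvd redpi hki h.
have p0 : (0 < p)%N by exact: prime_gt0.
have pn0 : p%:Z != 0 by rewrite eqz_nat -lt0n.
set na := `|arem p l|%N.
have ha : arem p l = na%:Z by rewrite /na abszE ger0_norm // modz_ge0.
have na_lt : (na < p)%N.
  have := ltz_pmod l (p0 : (0 < p%:Z)); rewrite -/(arem p l) ha; lia.
have na_gt : (0 < na)%N.
  rewrite lt0n; apply/eqP => na0; move: ndvd; rewrite -/(arem p l).
  by apply/negP/negPn/dvdz_mod0P; rewrite -/(arem p l) ha na0.
pose r x := ((x * na) %% p)%N.
have rmod : forall j : nat, ((arem p l + j%:Z * l) %% p)%Z = (r j.+1)%:Z.
  move=> j; rewrite -modzDmr -modzMmr -/(arem p l) ha modzDmr.
  by rewrite -PoszM -PoszD -modz_nat /r mulSn.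
have rli : ((i%:Z * l) %% p)%Z = (r i)%:Z.
  by rewrite -modzMmr -/(arem p l) ha -PoszM modz_nat.
pose C := ((i%:Z * l) %/ p)%Z.
pose c j : int := if (r j.+1 + r i < p)%N then 0 else 1.
have nudiff : forall j : nat, nu p l (i + j) - nu p l j = C + c j.
  move=> j; rewrite /nu.
  have -> : arem p l + (i + j)%N%:Z * l = (arem p l + j%:Z * l) + i%:Z * l.
    by rewrite PoszD; ring.
  rewrite divzD_carry // rmod rli /c ltz_nat.
  by rewrite /C; ring.
have hi : (i < p)%N by lia.
have nmin_le : forall j : nat, (j < p - i)%N -> nmin p l i <= C + c j.
  move=> j hj; rewrite -nudiff /nmin.
  exact: (bigmin_le _ (Ordinal hj)).
have nmin_ge : forall B, (forall j : nat, (j < p - i)%N -> B <= C + c j) -> B <= nmin p l i.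
  move=> B HB; rewrite /nmin; apply: le_bigmin.
    by rewrite -{1}(addn0 i) nudiff; apply: HB; lia.
  by move=> j _; rewrite nudiff; apply: HB.
have c01 : forall j, 0 <= c j <= 1 by move=> j; rewrite /c; case: ifP.
have muE : mu_exp p l k i = C + c k - nmin p l i.
  by rewrite /mu_exp addnC -nudiff.
have mu_ge0 : 0 <= mu_exp p l k i.
  by rewrite muE subr_ge0 nmin_le //; lia.
have redmu : red (mu piK p l k (k + i) i) = (mu_exp p l k i == 0)%:R.
  rewrite /mu eqxx rmorphXn redpi expr0n.
  by rewrite absz_eq0.
split => //.
split.
  by move=> j _ hj; rewrite /mu (negbTE hj) rmorph0.
rewrite redmu.
have hh0 := True.
have frlt : forall x y, (fr p l x < fr p l y) = (r x < r y)%N.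
  by move=> x y; rewrite !fr_nat // -/na ltr_pM2r ?invr_gt0 ?ltr0n // ltr_nat.
case: (posnP i) => [i0|ipos].
  move: hh0; subst i => hh0.
  have h_p : h = p by rewrite /h subn0.
  have ci : forall j, c j = 0.
    by move=> j; rewrite /c /r mul0n mod0n addn0 ltn_pmod.
  have -> : mu_exp p l k 0 = 0.
    apply/eqP; rewrite eq_le mu_ge0 andbT muE ci addr0 subr_le0.
    by apply: nmin_ge => j _; rewrite ci addr0.
  by rewrite h_p !eqxx /=.
have hh1 : (1 <= h < p)%N by rewrite /h; lia.
have ndna : ~~ (p %| na)%N by rewrite gtnNdvd.
have rnz : forall x, (0 < x < p)%N -> (0 < r x)%N.
  move=> x /andP [x0 xp]; rewrite lt0n; apply/negP => /eqP rx0.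
  have : (p %| x * na)%N by rewrite /dvdn -/(r x) rx0.
  by rewrite Euclid_dvdM // (gtnNdvd x0 xp) (negbTE ndna).
have rlt : forall x, (r x < p)%N by move=> x; rewrite ltn_pmod.
have rih : (r i + r h = p)%N.
  have hs : ((r i + r h) %% p = 0)%N.
    by rewrite /r modnDm -mulnDl /h subnKC ?modnMr //; lia.
  apply: (@sum_eq_p _ _ ((r i + r h) %/ p)%N p (rnz i _) (rlt i) (rlt h)).
    by rewrite ipos.
  by rewrite -hs -divn_eq.
have cE : forall j, c j = if (r j.+1 < r h)%N then 0 else 1.
  by move=> j; rewrite /c -rih addnC ltn_add2l.
have rneq : forall x, (0 < x < h)%N -> r x != r h.
  move=> x /andP [x0 xh]; apply/negP => /eqP rx.
  have : (h * na == x * na %[mod p])%N by rewrite -/(r h) -/(r x) rx.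
  rewrite eqn_mod_dvd ?leq_mul2r ?(ltnW xh) ?orbT // -mulnBl Euclid_dvdM //.
  rewrite (negbTE ndna) orbF gtnNdvd //; lia.
have hnp : (h == p) = false by apply/negbTE; rewrite /h; lia.
rewrite hnp /= frlt addn1.
have hk : (k < p - i)%N by lia.
case: ifP => rk.
  have -> : mu_exp p l k i = 0.
    apply/eqP; rewrite eq_le mu_ge0 andbT muE cE rk addr0 subr_le0.
    by apply: nmin_ge => j _; rewrite lerDl; case/andP: (c01 j).
  by [].
split.
  move=> nE.
  have [h' [h1 [h2 nlt]]] : exists h', (1 <= h')%N /\ (h' < h)%N /\ ~~ (fr p l h < fr p l h').
    apply: NNPP => nex; apply: nE; split; first by case/andP: hh1.
    split; first by case/andP: hh1.
    move=> h' h1 h2; apply/negPn/negP => nlt; apply: nex; exists h'; split => //.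
  have rh' : (r h' < r h)%N.
    move: nlt; rewrite frlt -leqNgt leq_eqVlt => /orP [/eqP e|//].
    by move: (rneq h'); rewrite e eqxx; move/(_ ltac:(lia)).
  have : nmin p l i <= C.
    have := nmin_le h'.-1 ltac:(lia); rewrite cE prednK ?rh' ?addr0 //; lia.
  have := c01 k; rewrite cE rk => _ hn.
  have : mu_exp p l k i != 0 by rewrite muE cE rk; apply/eqP; lia.
  by move/negbTE ->.
case => _ [_ HE].
have -> : mu_exp p l k i = 0.
  apply/eqP; rewrite eq_le mu_ge0 andbT muE cE rk subr_le0.
  apply: nmin_ge => j hj; rewrite cE.
  case: ltnP => // rj.
  have jh : (j.+1 < h)%N.
    rewrite ltn_neqAle; apply/andP; split; last by rewrite /h; lia.
    by apply/eqP => e; move: rj; rewrite e ltnn.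
  by have := HE j.+1 isT jh; rewrite frlt ltnNge ltnW.
by [].
Qed.
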